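(* Let $\beta,\mu,\alpha,\omega,\delta,m_1,m_2,a_1,a_2$ be positive real numbers and consider the system of ordinary differential equations $$\dot S = S(\beta-\mu S) - S f_2(I,V),\qquad \dot I = S f_2(I,V) - \alpha I,\qquad \dot V = -\omega V + \delta I,$$ where $$f_2(I,V)=\frac{m_1 I}{a_1+I+V}+\frac{m_2 V}{a_2+I+V}.$$ Define $$\mathcal{R}_0=\frac{m_1a_2+\frac{\delta}{\omega}m_2a_1}{\alpha a_1a_2}\cdot\frac{\beta}{\mu}.$$ Then the system has an equilibrium $(S',I',V')$ with $S'>0$, $I'>0$, $V'>0$ if and only if $\mathcal{R}_0>1$, and when $\mathcal{R}_0>1$ such a positive equilibrium is unique.
   Context: $S$ denotes susceptible fish, $I$ infected fish and $V$ free virus (rescaled); $\beta$ is the birth rate and $\mu$ the density-dependent mortality rate of susceptible fish, $\alpha$ the mortality rate of infected fish, $\delta$ the viral shedding rate, $\omega$ the viral clearance rate, and $m_1,m_2,a_1,a_2$ are parameters of the force of infection. An equilibrium is a point at which all three right-hand sides vanish; a positive (endemic) equilibrium is one with all coordinates strictly positive. *)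

(* Defs.v *)
From Stdlib Require Import Reals Lra.
Open Scope R_scope.

Definition f2 (m1 m2 a1 a2 I V : R) : R :=
  m1 * I / (a1 + I + V) + m2 * V / (a2 + I + V).

Definition rhsS (beta mu m1 m2 a1 a2 S I V : R) : R :=
  S * (beta - mu * S) - S * f2 m1 m2 a1 a2 I V.
Definition rhsI (alpha m1 m2 a1 a2 S I V : R) : R :=
  S * f2 m1 m2 a1 a2 I V - alpha * I.
Definition rhsV (omega delta I V : R) : R :=
  - omega * V + delta * I.

Definition is_equilibrium (beta mu alpha omega delta m1 m2 a1 a2 S I V : R) : Prop :=
  rhsS beta mu m1 m2 a1 a2 S I V = 0 /\
  rhsI alpha m1 m2 a1 a2 S I V = 0 /\
  rhsV omega delta I V = 0.

Definition is_positive_equilibrium (beta mu alpha omega delta m1 m2 a1 a2 S I V : R) : Prop :=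
  0 < S /\ 0 < I /\ 0 < V /\
  is_equilibrium beta mu alpha omega delta m1 m2 a1 a2 S I V.

Definition basicR0 (beta mu alpha omega delta m1 m2 a1 a2 : R) : R :=
  (m1 * a2 + delta / omega * m2 * a1) / (alpha * a1 * a2) * (beta / mu).

(* Main.v *)
Require Import Defs.
From Stdlib Require Import Reals.
From Stdlib Require Import Lra Psatz.
Open Scope R_scope.

Definition gg (m1 m2 a1 a2 k x : R) : R :=
  m1 / (a1 + (1+k)*x) + m2 * k / (a2 + (1+k)*x).

Lemma gg_pos m1 m2 a1 a2 k x : 0 < m1 -> 0 < m2 -> 0 < a1 -> 0 < a2 -> 0 < k -> 0 <= x ->
  0 < gg m1 m2 a1 a2 k x.
Proof.
  intros. unfold gg. apply Rplus_lt_0_compat; apply Rdiv_lt_0_compat; nra.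
Qed.

Lemma gg_dec m1 m2 a1 a2 k x y : 0 < m1 -> 0 < m2 -> 0 < a1 -> 0 < a2 -> 0 < k -> 0 <= x -> x < y ->
  gg m1 m2 a1 a2 k y < gg m1 m2 a1 a2 k x.
Proof.
  intros. unfold gg, Rdiv. apply Rplus_lt_compat.
  - apply Rmult_lt_compat_l; [lra|]. apply Rinv_lt_contravar; [apply Rmult_lt_0_compat|]; nra.
  - apply Rmult_lt_compat_l; [nra|]. apply Rinv_lt_contravar; [apply Rmult_lt_0_compat|]; nra.
Qed.

Lemma frac_inc m a c x y : 0 < m -> 0 < a -> 0 < c -> 0 <= x -> x < y ->
  m * x / (a + c*x) < m * y / (a + c*y).
Proof.
  intros. assert (m * y / (a + c*y) - m * x / (a + c*x) = m*a*(y-x) / ((a+c*x)*(a+c*y))).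
  { field. split; nra. }
  assert (0 < m*a*(y-x) / ((a+c*x)*(a+c*y))).
  { apply Rdiv_lt_0_compat; repeat apply Rmult_lt_0_compat; nra. }
  lra.
Qed.

Lemma F_inc m1 m2 a1 a2 k x y : 0 < m1 -> 0 < m2 -> 0 < a1 -> 0 < a2 -> 0 < k -> 0 <= x -> x < y ->
  x * gg m1 m2 a1 a2 k x < y * gg m1 m2 a1 a2 k y.
Proof.
  intros. assert (forall z, 0 <= z -> z * gg m1 m2 a1 a2 k z =
     m1 * z / (a1 + (1+k)*z) + (m2*k) * z / (a2 + (1+k)*z)).
  { intros z Hz. unfold gg. field. split; nra. }
  rewrite !H6 by lra. apply Rplus_lt_compat; apply frac_inc; nra.
Qed.

Lemma f2_gg m1 m2 a1 a2 k x : 0 < a1 -> 0 < a2 -> 0 < k -> 0 <= x ->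
  f2 m1 m2 a1 a2 x (k*x) = x * gg m1 m2 a1 a2 k x.
Proof.
  intros. unfold f2, gg.
  replace (a1 + x + k*x) with (a1 + (1+k)*x) by ring.
  replace (a2 + x + k*x) with (a2 + (1+k)*x) by ring.
  field. split; nra.
Qed.

Lemma eq_facts beta mu alpha omega delta m1 m2 a1 a2 S I V :
  0 < omega -> 0 < delta -> 0 < m1 -> 0 < m2 -> 0 < a1 -> 0 < a2 ->
  is_positive_equilibrium beta mu alpha omega delta m1 m2 a1 a2 S I V ->
  V = (delta/omega) * I /\
  S * gg m1 m2 a1 a2 (delta/omega) I = alpha /\
  beta - mu * S = I * gg m1 m2 a1 a2 (delta/omega) I.
Proof.
  intros ho hd h1 h2 ha1 ha2 [hS [hI [hV [e1 [e2 e3]]]]].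
  unfold rhsS, rhsI, rhsV in *.
  assert (hk : 0 < delta/omega) by (apply Rdiv_lt_0_compat; lra).
  assert (HV : V = delta/omega * I). { field_simplify; [|lra]. apply (Rmult_eq_reg_l omega); [|lra]. field_simplify; lra. }
  subst V. rewrite f2_gg in e1, e2 by lra.
  split; [reflexivity|]. split.
  - apply (Rmult_eq_reg_l I); [|lra]. lra.
  - apply (Rmult_eq_reg_l S); [|lra]. lra.
Qed.

Theorem mainTheorem1 (beta mu alpha omega delta m1 m2 a1 a2 : R)
  (hbeta : 0 < beta) (hmu : 0 < mu) (halpha : 0 < alpha) (homega : 0 < omega)
  (hdelta : 0 < delta) (hm1 : 0 < m1) (hm2 : 0 < m2) (ha1 : 0 < a1) (ha2 : 0 < a2) :
  ((exists S I V, is_positive_equilibrium beta mu alpha omega delta m1 m2 a1 a2 S I V)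
     <-> 1 < basicR0 beta mu alpha omega delta m1 m2 a1 a2) /\
  (1 < basicR0 beta mu alpha omega delta m1 m2 a1 a2 ->
     forall S I V S' I' V',
       is_positive_equilibrium beta mu alpha omega delta m1 m2 a1 a2 S I V ->
       is_positive_equilibrium beta mu alpha omega delta m1 m2 a1 a2 S' I' V' ->
       S = S' /\ I = I' /\ V = V').
Proof.
  set (k := delta/omega).
  assert (hk : 0 < k) by (apply Rdiv_lt_0_compat; lra).
  set (g := gg m1 m2 a1 a2 k).
  assert (g0 : g 0 = (m1*a2 + k*m2*a1)/(a1*a2)).
  { unfold g, gg. replace ((1+k)*0) with 0 by ring. field. lra. }
  assert (HR : basicR0 beta mu alpha omega delta m1 m2 a1 a2 = g 0 * beta / (alpha*mu)).
  { unfold basicR0. rewrite g0. fold k. field. lra. }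
  assert (hkdef : k = delta/omega) by reflexivity. clearbody k.
  assert (gpos : forall x, 0 <= x -> 0 < g x) by (intros; apply gg_pos; lra).
  assert (R0iff : 1 < basicR0 beta mu alpha omega delta m1 m2 a1 a2 <-> mu*alpha < beta * g 0).
  { rewrite HR. assert (0 < alpha*mu) by nra. split; intro H1.
    - apply (Rmult_lt_compat_r (alpha*mu)) in H1; [|lra].
      unfold Rdiv in H1. rewrite Rmult_assoc, Rinv_l in H1 by lra. lra.
    - apply (Rmult_lt_reg_r (alpha*mu)); [lra|]. unfold Rdiv. rewrite Rmult_assoc, Rinv_l by lra. lra. }
  split; [split|].
  - intros [S [I [V HE]]].
    destruct (eq_facts _ _ _ _ _ _ _ _ _ _ _ _ homega hdelta hm1 hm2 ha1 ha2 HE) as [_ [E2 E3]].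
    rewrite <- hkdef in E2, E3. fold g in E2, E3. destruct HE as [hS [hI _]].
    apply R0iff. assert (g I < g 0) by (apply gg_dec; lra).
    assert (0 < I * g I) by (apply Rmult_lt_0_compat; auto; apply gpos; lra).
    nra.
  - intro H. apply R0iff in H.
    set (c := 1 + k).
    set (N := fun x => m1*(a2+c*x) + m2*k*(a1+c*x)).
    set (P := fun x => beta * N x * (a1+c*x) * (a2+c*x) - mu*alpha*((a1+c*x)*(a2+c*x))^2 - x * (N x)^2).
    set (h := fun x => beta - mu*alpha/g x - x * g x).
    assert (gN : forall x, 0 <= x -> g x = N x / ((a1+c*x)*(a2+c*x))).
    { intros x Hx. unfold g, gg, N. fold c. field. split; unfold c; nra. }
    assert (Npos : forall x, 0 <= x -> 0 < N x).
    { intros x Hx. unfold N, c. apply Rplus_lt_0_compat; [apply Rmult_lt_0_compat|apply Rmult_lt_0_compat; [apply Rmult_lt_0_compat|]]; nra. }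
    assert (Ph : forall x, 0 <= x -> P x = N x * (a1+c*x) * (a2+c*x) * h x).
    { intros x Hx. unfold P, h. rewrite gN by lra. specialize (Npos x Hx). field. split; [|split]; unfold c; nra. }
    set (x0 := beta * (m1 + m2*k) / (c*mu*alpha)).
    assert (hx0 : 0 < x0) by (unfold x0, c; apply Rdiv_lt_0_compat; repeat apply Rmult_lt_0_compat; nra).
    assert (P0 : 0 < P 0).
    { assert (hN0: 0 < m1*a2 + k*m2*a1).
      { assert (0<m1*a2) by (apply Rmult_lt_0_compat; lra).
        assert (0<k*m2*a1) by (repeat apply Rmult_lt_0_compat; lra). lra. }
      assert (ha12 : 0 < a1*a2) by (apply Rmult_lt_0_compat; lra).
      assert (Hb : mu*alpha*(a1*a2) < beta*(m1*a2+k*m2*a1)).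
      { rewrite g0 in H.
        replace (beta*((m1*a2+k*m2*a1)/(a1*a2))) with (beta*(m1*a2+k*m2*a1)*/(a1*a2)) in H by (field; lra).
        apply Rmult_lt_reg_r with (/(a1*a2)). apply Rinv_0_lt_compat; lra.
        replace (mu*alpha*(a1*a2)*/(a1*a2)) with (mu*alpha) by (field;lra). exact H. }
      assert (P 0 = a1*a2*(beta*(m1*a2+k*m2*a1) - mu*alpha*(a1*a2))) by (unfold P, N; cbv beta; ring).
      rewrite H0. apply Rmult_lt_0_compat; lra. }
    assert (Px0 : P x0 < 0).
    { rewrite Ph by lra. assert (h x0 < 0).
      { unfold h. assert (0 < g x0) by (apply gpos; lra).
        assert (0 < x0 * g x0) by nra.
        assert (g x0 < mu*alpha/beta).
        { unfold g, gg. fold c.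
          assert (m1 / (a1 + c*x0) < m1 / (c*x0)).
          { unfold Rdiv. apply Rmult_lt_compat_l; [lra|]. apply Rinv_lt_contravar; unfold c in *; [apply Rmult_lt_0_compat|]; nra. }
          assert (m2*k / (a2 + c*x0) < m2*k / (c*x0)).
          { unfold Rdiv. apply Rmult_lt_compat_l; [nra|]. apply Rinv_lt_contravar; unfold c in *; [apply Rmult_lt_0_compat|]; nra. }
          assert (m1/(c*x0) + m2*k/(c*x0) = mu*alpha/beta).
          { unfold x0. field. unfold c in *; repeat split; nra. }
          lra. }
        assert (beta <= mu*alpha / g x0).
        { apply (Rmult_le_reg_r (g x0)); [lra|]. unfold Rdiv. rewrite Rmult_assoc, Rinv_l by lra.
          apply (Rmult_lt_compat_l beta) in H2; [|lra]. unfold Rdiv in H2.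
          rewrite (Rmult_comm (mu*alpha)), <- Rmult_assoc, Rinv_r in H2 by lra. lra. }
        lra. }
      assert (0 < N x0 * (a1 + c*x0) * (a2 + c*x0)).
      { specialize (Npos x0 ltac:(lra)). unfold c in *.
        apply Rmult_lt_0_compat; [apply Rmult_lt_0_compat|]; nra. }
      nra. }
    destruct (IVT (fun x => - P x) 0 x0) as [z [[hz1 hz2] hz]].
    { unfold P, N. reg. }
    { lra. } { lra. } { lra. }
    assert (hzpos : 0 < z).
    { destruct hz1 as [hz1|hz1]; auto. subst z. lra. }
    assert (hzh : h z = 0).
    { assert (P z = 0) by lra. rewrite Ph in H0 by lra.
      assert (0 < N z * (a1 + c*z) * (a2 + c*z)).
      { specialize (Npos z ltac:(lra)). unfold c in *.
        apply Rmult_lt_0_compat; [apply Rmult_lt_0_compat|]; nra. }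
      apply (Rmult_eq_reg_l (N z * (a1 + c*z) * (a2 + c*z))); lra. }
    assert (gz : 0 < g z) by (apply gpos; lra).
    exists (alpha / g z), z, (k*z).
    unfold is_positive_equilibrium, is_equilibrium, rhsS, rhsI, rhsV.
    rewrite f2_gg by lra. fold g. unfold h in hzh.
    split; [apply Rdiv_lt_0_compat; lra|].
    split; [lra|]. split; [nra|]. split; [|split].
    + replace (alpha / g z * (beta - mu * (alpha / g z)) - alpha / g z * (z * g z))
        with (alpha / g z * (beta - mu * alpha / g z - z * g z)) by (field; lra).
      rewrite hzh. ring.
    + field. lra.
    + rewrite hkdef. field. lra.
  - intros _ S I V S' I' V' HE HE'.
    destruct (eq_facts _ _ _ _ _ _ _ _ _ _ _ _ homega hdelta hm1 hm2 ha1 ha2 HE) as [E1 [E2 E3]].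
    destruct (eq_facts _ _ _ _ _ _ _ _ _ _ _ _ homega hdelta hm1 hm2 ha1 ha2 HE') as [E1' [E2' E3']].
    rewrite <- hkdef in E1, E2, E3, E1', E2', E3'. fold g in E1, E2, E3, E1', E2', E3'.
    destruct HE as [hS [hI _]]. destruct HE' as [hS' [hI' _]].
    assert (key : forall S I S' I', 0 < S -> 0 < I -> 0 < S' -> 0 < I' -> I < I' ->
        S * g I = alpha -> beta - mu*S = I * g I ->
        S' * g I' = alpha -> beta - mu*S' = I' * g I' -> False).
    { clear -gpos hm1 hm2 ha1 ha2 hk hmu halpha. intros S I S' I' hS hI hS' hI' hlt e2 e3 e2' e3'.
      assert (g I' < g I) by (apply gg_dec; lra).
      assert (I * g I < I' * g I') by (apply F_inc; lra).
      assert (0 < g I') by (apply gpos; lra).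
      assert (S < S').
      { destruct (Rlt_or_le S S') as [?|Hle]; auto.
        assert (S' * g I' < S' * g I) by (apply Rmult_lt_compat_l; lra).
        assert (S' * g I <= S * g I) by (apply Rmult_le_compat_r; lra). lra. }
      assert (mu*S < mu*S') by (apply Rmult_lt_compat_l; lra). lra. }
    assert (I = I').
    { destruct (Rtotal_order I I') as [Hl|[He|Hg]]; auto; exfalso.
      - exact (key S I S' I' hS hI hS' hI' Hl E2 E3 E2' E3').
      - exact (key S' I' S I hS' hI' hS hI Hg E2' E3' E2 E3). }
    subst I'. split; [|split; [reflexivity|]]; [|subst; reflexivity].
    assert (0 < g I) by (apply gpos; lra). apply (Rmult_eq_reg_r (g I)); lra.
Qed.
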